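(* Let $X$ be a Tychonoff space whose $P$-number is $\tau$, and suppose $X$ has a $\tau$-discrete basis of clopen sets. Then $X^n$ is a generalized ordered space for every natural number $n$.
   Context: All spaces are Tychonoff. The $P$-number of a space $X$ is $|X|$ if $X$ is discrete; otherwise it is the largest cardinal $\tau$ such that the intersection of any family of fewer than $\tau$ open subsets of $X$ is open. A family of subsets of $X$ is discrete if every point of $X$ has a neighborhood meeting at most one member of the family. A $\tau$-discrete basis of clopen sets is a base for the topology of the form $\bigcup_{\alpha<\tau}\mathcal B_\alpha$ consisting of clopen sets, with each $\mathcal B_\alpha$ a discrete family. A generalized ordered space (GO-space) is a space homeomorphic to a subspace of a linearly ordered topological space (a space whose topology is generated by open intervals and open rays of some linear order). *)

(* Defs.v *)
From HB Require Import structures.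
From mathcomp Require Import all_boot all_order all_algebra.
From mathcomp Require Import all_classical all_reals all_analysis.
From mathcomp Require Import Rstruct Rstruct_topology.

Set Implicit Arguments.
Unset Strict Implicit.
Unset Printing Implicit Defensive.

Import Order.TTheory GRing.Theory Num.Theory.
Local Open Scope classical_set_scope.

Definition completely_regular (X : topologicalType) : Prop :=
  forall (F : set X) (x : X), closed F -> ~ F x ->
    exists f : X -> Rdefinitions.R,
      continuous f /\ f x = 0%R /\ (forall y, F y -> f y = 1%R).

Definition tychonoff_space (X : topologicalType) : Prop :=
  @accessible_space X /\ completely_regular X.

Definition discrete_sp (X : topologicalType) : Prop :=
  forall x : X, open [set x].

(* Every family of fewer than |K| open sets has open intersection.  A family
   of fewer than |K| sets is indexed by a subset A of K whose cardinal is
   strictly smaller than that of K. *)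
Definition small_intersections_open (X : topologicalType) (K : Type) : Prop :=
  forall (A : set K), ~ ([set: K] #<= A)%card ->
  forall U : K -> set X, (forall i, A i -> open (U i)) ->
    open (\bigcap_(i in A) U i).

(* The P-number of X is |K|:  |X| if X is discrete, otherwise the largest
   cardinal tau such that intersections of fewer than tau open sets are open. *)
Definition pnumber_is (X : topologicalType) (K : Type) : Prop :=
  (discrete_sp X -> ([set: K] #= [set: X])%card) /\
  (~ discrete_sp X ->
     small_intersections_open X K /\
     (forall J : Type, small_intersections_open X J ->
        ([set: J] #<= [set: K])%card)).

Definition discrete_family (X : topologicalType) (F : set (set X)) : Prop :=
  forall x : X, exists N : set X, nbhs x N /\
    forall U V, F U -> F V -> N `&` U !=set0 -> N `&` V !=set0 -> U = V.

Definition tau_discrete_clopen_basis (X : topologicalType) (K : Type) : Prop :=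
  exists B : K -> set (set X),
    (forall a, discrete_family (B a)) /\
    (forall a U, B a U -> clopen U) /\
    basis (\bigcup_(a in [set: K]) B a).

(* Generalized ordered space: homeomorphic to a subspace of a linearly ordered
   topological space (f is a topological embedding). *)
Definition GO_space (Y : topologicalType) : Prop :=
  exists (d : Order.disp_t) (L : orderTopologicalType d) (f : Y -> L),
    injective f /\ continuous f /\
    (forall U : set Y, open U ->
       exists V : set L, open V /\ f @` U = V `&` range f).

(* Main.v *)
Require Import Defs.
From HB Require Import structures.
From mathcomp Require Import all_boot all_order all_algebra.
From mathcomp Require Import all_classical all_reals all_analysis.
From mathcomp Require Import wochoice.
Import Order.TTheory.
Set Implicit Arguments.
Unset Strict Implicit.
Local Open Scope classical_set_scope.

Record sto (T : Type) := STO {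
  slt : T -> T -> Prop;
  slt_irr : forall a, ~ slt a a;
  slt_trans : forall a b c, slt a b -> slt b c -> slt a c;
  slt_tri : forall a b, a = b \/ slt a b \/ slt b a }.
Arguments slt {T} _ _ _.
Arguments slt_irr {T} _ _ _.
Arguments slt_trans {T} _ {a b c} _ _.
Arguments slt_tri {T} _ _ _.

Record wo (T : Type) := WO {
  wsto :> sto T;
  wlt_wf : forall S : set T, S !=set0 -> exists m, S m /\ forall b, S b -> ~ slt wsto b m }.
Arguments wlt_wf {T} _ _ _.

Section Lex.
Variables (K : Type) (wK : wo K) (D : Type) (sD : sto D).
Local Notation ltK := (slt wK).
Local Notation ltD := (slt sD).

Definition ltP (p q : D * nat) := ltD p.1 q.1 \/ (p.1 = q.1 /\ (p.2 < q.2)%N).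

Lemma ltP_irr p : ~ ltP p p.
Proof. by case=> [h|[_]]; [exact: (slt_irr sD _ h)|rewrite ltnn]. Qed.

Lemma ltP_trans p q r : ltP p q -> ltP q r -> ltP p r.
Proof.
case=> [h1|[e1 h1]] [h2|[e2 h2]].
- by left; apply: slt_trans h1 h2.
- by left; rewrite -e2.
- by left; rewrite e1.
- by right; split; [rewrite e1 | apply: ltn_trans h1 h2].
Qed.

Lemma ltP_tri p q : p = q \/ ltP p q \/ ltP q p.
Proof.
case: p q => [a m] [b k]; rewrite /ltP /=.
case: (slt_tri sD a b) => [<-|[h|h]]; [|by right; left; left|by right; right; left].
case: (ltngtP m k) => [h|h|->]; first (by right; left; right).
  by right; right; right.
by left.
Qed.

Definition lexlt (f g : K -> D * nat) :=
  exists a, (forall b, ltK b a -> f b = g b) /\ ltP (f a) (g a).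

Lemma lexlt_irr f : ~ lexlt f f.
Proof. by case=> a [_ /ltP_irr]. Qed.

Lemma lexlt_trans f g h : lexlt f g -> lexlt g h -> lexlt f h.
Proof.
move=> [a [fga ha]] [c [ghc hc]].
case: (slt_tri wK a c) => [ac|[ac|ca]].
- subst c; exists a; split; first by move=> b ba; rewrite fga // ghc.
  exact: ltP_trans ha hc.
- exists a; split; first by move=> b ba; rewrite fga // ghc //; apply: slt_trans ba ac.
  by rewrite -(ghc a ac).
- exists c; split; first by move=> b bc; rewrite fga ?ghc //; apply: slt_trans bc ca.
  by rewrite (fga c ca).
Qed.

Lemma lexlt_tri f g : f = g \/ lexlt f g \/ lexlt g f.
Proof.
have [->|nfg] := pselect (f = g); first by left.
right.
have : [set b | f b <> g b] !=set0.
  apply/set0P/negP => /eqP E; apply: nfg; apply: funext => b.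
  apply: contrapT => h; have : [set b | f b <> g b] b by [].
  by rewrite E.
move=> /(wlt_wf wK) [m [hm mmin]].
have below : forall b, ltK b m -> f b = g b.
  by move=> b bm; apply: contrapT => h; exact: (mmin b h bm).
case: (ltP_tri (f m) (g m)) => [//|[h|h]].
- by left; exists m.
- by right; exists m; split=> // b bm; rewrite below.
Qed.

Definition lexle f g := f = g \/ lexlt f g.

End Lex.

Definition lexT (K : Type) (wK : wo K) (D : Type) (sD : sto D) := K -> D * nat.

HB.instance Definition _ K wK D sD := gen_eqMixin (@lexT K wK D sD).
HB.instance Definition _ K wK D sD := gen_choiceMixin (@lexT K wK D sD).

Section LexOrder.
Variables (K : Type) (wK : wo K) (D : Type) (sD : sto D).
Local Notation T := (@lexT K wK D sD).

Definition lexleb (f g : T) : bool := `[< lexle wK sD f g >].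

Lemma lexleb_refl : reflexive lexleb.
Proof. by move=> f; apply/asboolP; left. Qed.

Lemma lexleb_anti : antisymmetric lexleb.
Proof.
move=> f g /andP[/asboolP [//|h1] /asboolP [e|h2]]; first by rewrite e.
by case: (lexlt_irr (lexlt_trans h1 h2)).
Qed.

Lemma lexleb_trans : transitive lexleb.
Proof.
move=> g f h /asboolP [->//|h1] /asboolP [<-|h2]; apply/asboolP; first by right.
by right; apply: lexlt_trans h1 h2.
Qed.

HB.instance Definition _ := Order.Le_isPOrder.Build Order.default_display T
  lexleb_refl lexleb_anti lexleb_trans.

Lemma lexleb_total : total (<=%O : rel T).
Proof.
move=> f g; case: (lexlt_tri wK sD f g) => [->|[h|h]].
- by rewrite Order.POrderTheory.le_refl.
- by apply/orP; left; apply/asboolP; right.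
- by apply/orP; right; apply/asboolP; right.
Qed.

HB.instance Definition _ := Order.POrder_isTotal.Build Order.default_display T
  lexleb_total.

Lemma lexltE (f g : T) : (f < g)%O <-> lexlt wK sD f g.
Proof.
rewrite Order.POrderTheory.lt_neqAle; split.
  by case/andP => /eqP nfg /asboolP [e|//]; case: nfg.
move=> h; apply/andP; split; last by apply/asboolP; right.
by apply/eqP => e; rewrite e in h; exact: lexlt_irr h.
Qed.

End LexOrder.

Section GEL.
Variables (K : Type) (wK : wo K) (D : Type) (sD : sto D).
Local Notation ltK := (slt wK).
Local Notation L := (order_topology (lexT wK sD)).

Definition agree (a : K) (z w : K -> D * nat) := forall b, b = a \/ ltK b a -> z b = w b.

Lemma agree_mono a a' z w : (a' = a \/ ltK a' a) -> agree a z w -> agree a' z w.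
Proof.
move=> h ag b [->|ba]; apply: ag => //; case: h => [<-|h]; first by right.
by right; apply: slt_trans ba h.
Qed.

Lemma upper_bound2 a1 a2 : exists a, (a1 = a \/ ltK a1 a) /\ (a2 = a \/ ltK a2 a).
Proof.
case: (slt_tri wK a1 a2) => [<-|[h|h]]; first by exists a1; split; left.
- by exists a2; split; [right|left].
- by exists a1; split; [left|right].
Qed.

Lemma lower_stable (a z0 : L) : (a < z0)%O ->
  exists al, forall z : L, agree al z z0 -> (a < z)%O.
Proof.
move=> /lexltE [al [hb hl]]; exists al => z ag; apply/lexltE; exists al; split.
  by move=> b ba; rewrite hb // ag //; right.
by rewrite ag //; left.
Qed.

Lemma upper_stable (b z0 : L) : (z0 < b)%O ->
  exists al, forall z : L, agree al z z0 -> (z < b)%O.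
Proof.
move=> /lexltE [al [hb hl]]; exists al => z ag; apply/lexltE; exists al; split.
  by move=> c ca; rewrite -hb // ag //; right.
by rewrite ag //; left.
Qed.

Lemma itv_stable (k0 : K) (i : interval L) (z0 : L) : itv_open_ends i -> z0 \in i ->
  exists al, forall z : L, agree al z z0 -> z \in i.
Proof.
move: i => [[[] l|[]] [[] r|[]]] //= _; rewrite ?in_itv /= => xi.
- case/andP: xi => xl xr; have [a1 h1] := lower_stable xl.
  have [a2 h2] := upper_stable xr.
  have [a [e1 e2]] := upper_bound2 a1 a2.
  exists a => z ag; rewrite in_itv /=; apply/andP; split.
    by apply: h1; apply: agree_mono ag.
  by apply: h2; apply: agree_mono ag.
- rewrite andbT in xi; have [a1 h1] := lower_stable xi; exists a1 => z ag; rewrite in_itv /=.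
  by rewrite andbT; apply: h1.
- have [a1 h1] := upper_stable xi; exists a1 => z ag; rewrite in_itv /=.
  by apply: h1.
- by exists k0 => z _; rewrite in_itv.
Qed.

Variables (Y : topologicalType) (c : K -> Y -> D).

Definition Fm (y : Y) : L := fun a => (c a y, 1%N).
Definition lom (x : Y) (a0 : K) : L :=
  fun b => if pselect (b = a0) then (c a0 x, 0%N) else (c b x, 1%N).
Definition him (x : Y) (a0 : K) : L :=
  fun b => if pselect (b = a0) then (c a0 x, 2%N) else (c b x, 1%N).

Lemma lom_ne x a b : b <> a -> lom x a b = (c b x, 1%N).
Proof. by move=> h; rewrite /lom; case: pselect. Qed.
Lemma him_ne x a b : b <> a -> him x a b = (c b x, 1%N).
Proof. by move=> h; rewrite /him; case: pselect. Qed.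
Lemma lom_eq x a : lom x a a = (c a x, 0%N).
Proof. by rewrite /lom; case: pselect. Qed.
Lemma him_eq x a : him x a a = (c a x, 2%N).
Proof. by rewrite /him; case: pselect. Qed.

Lemma Fm_in x a : Fm x \in `]lom x a, him x a[%O.
Proof.
rewrite in_itv /=; apply/andP; split; apply/lexltE; exists a; split.
- by move=> b ba; rewrite lom_ne //; move=> e; subst b; exact: (slt_irr wK a).
- by rewrite lom_eq; right.
- by move=> b ba; rewrite him_ne //; move=> e; subst b; exact: (slt_irr wK a).
- by rewrite him_eq; right.
Qed.

Lemma sandwich x a y : lexlt wK sD (lom x a) (Fm y) -> lexlt wK sD (Fm y) (him x a) ->
  agree a (Fm y) (Fm x).
Proof.
move=> [a1 [hb1 hl1]] [a2 [hb2 hl2]].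
have lohi : forall b, b <> a -> lom x a b = him x a b.
  by move=> b h; rewrite lom_ne // him_ne.
have E1 : a1 = a.
  case: (slt_tri wK a1 a) => [//|[h|h]].
  - exfalso; have : lexlt wK sD (him x a) (Fm y).
      exists a1; split.
        move=> b ba1; rewrite -lohi ?hb1 //.
        by move=> e; subst b; apply: (slt_irr wK a); apply: slt_trans ba1 h.
      rewrite -lohi //; by move=> e; subst a1; apply: (slt_irr wK a).
    by move=> h'; apply: (lexlt_irr (lexlt_trans h' (ex_intro _ a2 (conj hb2 hl2)))).
  - by have := hb1 a h; rewrite lom_eq /Fm => -[_].
have E2 : a2 = a.
  case: (slt_tri wK a2 a) => [//|[h|h]].
  - exfalso; have : lexlt wK sD (Fm y) (lom x a).
      exists a2; split.
        move=> b ba2; rewrite lohi ?hb2 //.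
        by move=> e; subst b; apply: (slt_irr wK a); apply: slt_trans ba2 h.
      rewrite lohi //; by move=> e; subst a2; apply: (slt_irr wK a).
    by move=> h'; apply: (lexlt_irr (lexlt_trans h' (ex_intro _ a1 (conj hb1 hl1)))).
  - by have := hb2 a h; rewrite him_eq /Fm => -[_].
subst a1 a2.
move=> b [->|ba].
  move: hl1 hl2; rewrite lom_eq him_eq /Fm /ltP /= => -[h1|[e1 _]] [h2|[e2 _]].
  - by case: (slt_irr sD _ (slt_trans sD h1 h2)).
  - by rewrite e2.
  - by rewrite e1.
  - by rewrite e1.
have := hb1 b ba; rewrite lom_ne; first by move=> <-.
by move=> e; subst b; apply: (slt_irr wK a).
Qed.

Lemma GEL (k0 : K)
  (hA : forall x a, nbhs x [set y | agree a (Fm y) (Fm x)])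
  (hB : forall x U, nbhs x U -> exists a, [set y | agree a (Fm y) (Fm x)] `<=` U)
  (hC : injective Fm) : GO_space Y.
Proof.
exists Order.default_display, L, Fm; split; first exact: hC.
split.
  move=> x V; rewrite itv_nbhsE => -[i [oi xi] iV].
  have [a ha] := itv_stable k0 oi xi.
  apply: filterS (hA x a) => y /= ag; apply: iV; exact: ha.
move=> U oU.
have : forall x, exists a, U x -> [set y | agree a (Fm y) (Fm x)] `<=` U.
  move=> x; case: (pselect (U x)) => Ux; last by exists k0.
  have nU : nbhs x U by move: oU; rewrite openE => /(_ x Ux).
  by have [a h] := hB x U nU; exists a.
case/choice => pa hpa.
exists (\bigcup_(x in U) `]lom x (pa x), him x (pa x)[); split.
  by apply: bigcup_open => x _; exact: itv_open.
apply/seteqP; split.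
  move=> _ [x Ux <-]; split; last by exists x.
  by exists x => //; exact: Fm_in.
move=> z [[x Ux h] [y _ E]]; subst z.
move: h; rewrite /= in_itv /=; case/andP => /lexltE h1 /lexltE h2.
exists y => //; apply: (hpa x Ux); exact: sandwich h1 h2.
Qed.

End GEL.

Definition ptd (T : Type) (t : T) := T.
HB.instance Definition _ (T : Type) (t : T) := gen_eqMixin (@ptd T t).
HB.instance Definition _ (T : Type) (t : T) := gen_choiceMixin (@ptd T t).
HB.instance Definition _ (T : Type) (t : T) := isPointed.Build (@ptd T t) t.
Section WO.
Variable K : Type.

Lemma exists_wo0 : exists w : wo K, True.
Proof.
case: (well_ordering_principle {classic K}) => R Rwo.
have min2 : forall x y : K, exists z, (z = x \/ z = y) /\ R z x /\ R z y.
  move=> x y.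
  have : nonempty [pred z : {classic K} | (z == x) || (z == y)].
    by exists x; rewrite inE eqxx.
  case/Rwo => z [[zin zlb] _]; exists z.
  split; first by move: zin; rewrite inE => /orP[] /eqP ->; [left|right].
  by split; apply: zlb; rewrite inE eqxx ?orbT.
have Rrefl : forall x, R x x.
  by move=> x; have [z [[]-> [] //]] := min2 x x.
have Rtot : forall x y, R x y \/ R y x.
  by move=> x y; have [z [[]-> [] ]] := min2 x y; [left|right].
have Ranti : forall x y, R x y -> R y x -> x = y.
  move=> x y hxy hyx.
  have : nonempty [pred z : {classic K} | (z == x) || (z == y)].
    by exists x; rewrite inE eqxx.
  case/Rwo => z [_ uniq].
  have ex : x = z by apply/esym/uniq; split; [rewrite inE eqxx|move=> w; rewrite inE => /orP[]/eqP ->].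
  have ey : y = z by apply/esym/uniq; split; [rewrite inE eqxx orbT|move=> w; rewrite inE => /orP[]/eqP ->].
  by rewrite ex ey.
have Rtrans : forall x y z, R x y -> R y z -> R x z.
  move=> x y z hxy hyz.
  have : nonempty [pred w : {classic K} | [|| w == x, w == y | w == z]].
    by exists x; rewrite inE eqxx.
  case/Rwo => m [[min mlb] _].
  have mx := mlb x; have my := mlb y; have mz := mlb z.
  rewrite !inE !eqxx ?orbT in mx my mz.
  have {}mx := mx isT; have {}my := my isT; have {}mz := mz isT.
  move: min; rewrite inE => /or3P[] /eqP E; subst m => //.
  - by rewrite (Ranti _ _ hxy mx).
  - by have eyz := Ranti _ _ hyz my; subst y.
pose lt := fun x y : K => R x y /\ x <> y.
have lt_irr : forall a, ~ lt a a by move=> a [_].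
have lt_trans : forall a b c, lt a b -> lt b c -> lt a c.
  move=> a b c [hab nab] [hbc nbc]; split; first exact: Rtrans hab hbc.
  by move=> e; subst c; apply: nab; apply: Ranti.
have lt_tri : forall a b, a = b \/ lt a b \/ lt b a.
  move=> a b; have [->|nab] := pselect (a = b); first by left.
  by right; case: (Rtot a b) => h; [left|right]; split => // e; apply: nab.
pose s := STO lt_irr lt_trans lt_tri.
have wf : forall S : set K, S !=set0 -> exists m, S m /\ forall b, S b -> ~ slt s b m.
  move=> S [x Sx].
  have : nonempty [pred z : {classic K} | `[< S z >]].
    by exists x; rewrite inE.
  case/Rwo => m [[min mlb] _]; exists m; split.
    by move: min; rewrite inE.
  move=> b Sb [Rbm nbm]; apply: nbm; apply: Ranti => //; apply: mlb.
  by rewrite inE.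
by exists (WO wf).
Qed.

Lemma card_extract (T : Type) (A B : set T) (t : T) : (A #<= B)%card ->
  exists2 g : T -> T, (forall x, A x -> B (g x)) & {in A &, injective g}.
Proof.
move=> h; have h' : (A #<= (B : set (ptd t)))%card by exact: h.
have := elimT (@pcard_leP T (ptd t : pointedType) A B) h'; rewrite injfunPex => -[g gfun ginj]; exists g => //.
Qed.

Lemma exists_wo : exists w : wo K, forall a, ~ ([set: K] #<= [set b | slt w b a])%card.
Proof.
have [w _] := exists_wo0.
case: (pselect (exists a, ([set: K] #<= [set b | slt w b a])%card)) => [[a1 h1]|nP]; last first.
  by exists w => a h; apply: nP; exists a.
have [a0 [P0 min0]] := wlt_wf w [set a | ([set: K] #<= [set b | slt w b a])%card] (ex_intro _ a1 h1).
have [g gfun ginj] := card_extract a0 P0.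
have gi : injective g by move=> x y e; apply: ginj; rewrite ?in_setT.
pose lt := fun a b => slt w (g a) (g b).
have lt_irr : forall a, ~ lt a a by move=> a; apply: slt_irr.
have lt_trans : forall a b c, lt a b -> lt b c -> lt a c.
  by move=> a b c; apply: slt_trans.
have lt_tri : forall a b, a = b \/ lt a b \/ lt b a.
  by move=> a b; case: (slt_tri w (g a) (g b)) => [/gi ->|h]; [left|right].
pose s := STO lt_irr lt_trans lt_tri.
have wf : forall S : set K, S !=set0 -> exists m, S m /\ forall b, S b -> ~ slt s b m.
  move=> S [x Sx].
  have [m' [[m Sm <-] mmin]] := wlt_wf w (g @` S) (ex_intro _ (g x) (ex_intro2 _ _ x Sx erefl)).
  exists m; split => // b Sb; apply: mmin; by exists b.
exists (WO wf) => a h.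
apply: (min0 (g a)); last exact: gfun.
apply: (card_le_trans h).
have e := inj_card_eq (f := g) (A := [set b | slt (WO wf) b a]) (fun x y _ _ => @gi x y).
rewrite card_eq_le in e; case/andP: e => _ e.
apply: (card_le_trans e); apply: subset_card_le.
by move=> _ [b hb <-].
Qed.
End WO.

Lemma box_nbhs (X : topologicalType) (n : nat) (W : 'I_n -> set X) (x : {ptws 'I_n -> X}) :
  (forall i, nbhs (x i) (W i)) -> nbhs x [set y : {ptws 'I_n -> X} | forall i, W i (y i)].
Proof.
move=> hW.
have h : forall i, nbhs x [set y : {ptws 'I_n -> X} | W i (y i)].
  move=> i; exact: (@proj_continuous 'I_n (fun _ => X) i x (W i) (hW i)).
exact: (@filter_forall _ 'I_n (fun i => [set y : {ptws 'I_n -> X} | W i (y i)]) (nbhs x) _ h).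
Qed.

Lemma cvg_ptws_filter (X : topologicalType) (n : nat) (x : {ptws 'I_n -> X}) (F : set_system {ptws 'I_n -> X}) :
  Filter F -> (forall i (V : set X), open V -> V (x i) -> F [set y | V (y i)]) -> F --> x.
Proof.
move=> FF hF.
apply/cvg_sup => i A /=.
rewrite (@nbhsE (Topological.Pack _)).
move=> [B [[V oV <-] Bx] BA].
by rewrite nbhs_filterE; apply: filterS BA (hF i V oV Bx).
Qed.

Lemma subsingleton_GO (Y : topologicalType) : (forall x y : Y, x = y) -> GO_space Y.
Proof.
move=> hs; exists _, (order_topology nat), (fun _ => 0%N); split.
  by move=> x y _; apply: hs.
split; first exact: cst_continuous.
move=> U oU; case: (pselect (U !=set0)) => [[u Uu]|nU].
  exists setT; split; first exact: openT.
  rewrite setTI; apply/seteqP; split; first by move=> _ [y _ <-]; exists y.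
  by move=> _ [y _ <-]; exists u.
exists set0; split; first exact: open0.
rewrite set0I; apply/seteqP; split=> // z [y Uy _]; apply: nU; by exists y.
Qed.

Definition cellset (X : Type) (K : Type) (B : K -> set (set X)) (b : K) (p : X) : set X :=
  [set q | forall U, B b U -> (U q <-> U p)].

Lemma disc_disjoint (X : topologicalType) (F : set (set X)) : discrete_family F ->
  forall U V x, F U -> F V -> U x -> V x -> U = V.
Proof.
move=> h U V x FU FV Ux Vx; have [N [Nx hN]] := h x; apply: hN => //.
  by exists x; split => //; exact: nbhs_singleton Nx.
by exists x; split => //; exact: nbhs_singleton Nx.
Qed.

Lemma cellset_open (X : topologicalType) (F : set (set X)) : discrete_family F ->
  (forall U, F U -> clopen U) -> forall p, open [set q | forall U, F U -> (U q <-> U p)].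
Proof.
move=> hd hc p; rewrite openE => q hq.
case: (pselect (exists U, F U /\ U q)) => [[U0 [FU0 U0q]]|none].
  apply: filterS (open_nbhs_nbhs (conj (hc _ FU0).1 U0q)) => r U0r U FU.
  rewrite -(hq U FU); split => [Ur|Uq].
    by have e := disc_disjoint hd FU FU0 Ur U0r; subst U.
  by have e := disc_disjoint hd FU FU0 Uq U0q; subst U.
have [N [Nq hN]] := hd q.
case: (pselect (exists V, F V /\ (N `&` V !=set0))) => [[V [FV NV]]|nomeet].
  have oV : open (~` V) by rewrite openC; exact: (hc _ FV).2.
  have nVq : (~` V) q by move=> Vq; apply: none; exists V.
  apply: filterS (filterI Nq (open_nbhs_nbhs (conj oV nVq))) => r [Nr nVr] U FU.
  rewrite -(hq U FU); split => [Ur|Uq]; last by case: none; exists U.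
  have e : U = V by apply: hN => //; exists r.
  by subst U.
apply: filterS Nq => r Nr U FU.
rewrite -(hq U FU); split => [Ur|Uq]; last by case: none; exists U.
by case: nomeet; exists U; split => //; exists r.
Qed.

Lemma discrete_all_open (X : topologicalType) : discrete_sp X -> forall A : set X, open A.
Proof.
move=> h A; have -> : A = \bigcup_(x in A) [set x].
  by apply/seteqP; split => [x Ax|x [y Ay ->]] //; exists x.
by apply: bigcup_open => x _; exact: h.
Qed.

Theorem theorem2p4 (X : topologicalType) (K : Type) :
  tychonoff_space X -> pnumber_is X K -> tau_discrete_clopen_basis X K ->
  forall n : nat, GO_space {ptws 'I_n -> X}.
Proof.
move=> [T1 _] [Pd Pnd] [B [Bdisc [Bclo Bbasis]]] n.
have bget : forall x W, nbhs x W -> exists a U, [/\ B a U, U x & U `<=` W].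
  move=> x W hW; have [U [[a _ BaU] Ux] UW] := Bbasis.2 x W hW.
  by exists a, U.
have [[k0 _]|noK] := pselect (exists k : K, True); last first.
  apply: subsingleton_GO => x y; apply: funext => i; exfalso.
  have [a [U _]] := bget (x i) setT filterT.
  by apply: noK; exists a.
have [wK wKs] := exists_wo K.
have [wD _] := exists_wo0 ('I_n -> set (set X)).
pose c := fun (b : K) (y : {ptws 'I_n -> X}) => (fun i => [set U | B b U /\ U (y i)]) : 'I_n -> set (set X).
have cE : forall b (x y : {ptws 'I_n -> X}), (forall i, cellset B b (x i) (y i)) -> c b y = c b x.
  move=> b x y h; apply: funext => i; apply/seteqP; split => U [BU hU]; split => //.
    by rewrite -(h i U BU).
  by rewrite (h i U BU).
have cE2 : forall a (x y : {ptws 'I_n -> X}) U i, c a y = c a x -> B a U -> U (x i) -> U (y i).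
  move=> a x y U i e BU Ux.
  have : c a x i U by split.
  by rewrite -e => -[].
apply: (@GEL K wK _ wD _ c k0).
- move=> x a.
  pose W i := \bigcap_(b in [set b | slt wK b a]) cellset B b (x i) `&` cellset B a (x i).
  have oW : forall i, open (W i).
    move=> i; apply: openI; last exact: cellset_open (Bdisc a) (Bclo a) (x i).
    case: (pselect (discrete_sp X)) => [dX|ndX]; first exact: discrete_all_open.
    exact: (Pnd ndX).1 [set b | slt wK b a] (wKs a) (fun b => cellset B b (x i))
      (fun b _ => cellset_open (Bdisc b) (Bclo b) (x i)).
  have Wx : forall i, W i (x i) by move=> i; split => [b _|] U _.
  apply: filterS (box_nbhs (W:=W) (fun i => open_nbhs_nbhs (conj (oW i) (Wx i)))).
  move=> y hy b hb; rewrite /Fm; congr pair; apply: cE => i.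
  by case: hb (hy i) => [->|hb] [h1 h2] //; apply: h1.
- move=> x U hU.
  pose F := filter_from setT (fun a => [set y : {ptws 'I_n -> X} | agree wK a (Fm wK wD c y) (Fm wK wD c x)]).
  have FF : Filter F.
    apply: filter_from_filter; first by exists k0.
    move=> a1 a2 _ _; have [a [e1 e2]] := upper_bound2 wK a1 a2.
    by exists a => // y h; split; apply: agree_mono h.
  have : F --> x.
    apply: cvg_ptws_filter => i V oV Vx.
    have [a [W [BaW Wx WV]]] := bget (x i) V (open_nbhs_nbhs (conj oV Vx)).
    exists a => // y ag; apply: WV.
    have := ag a (or_introl erefl); rewrite /Fm => -[e].
    exact: cE2 e BaW Wx.
  by move=> /(_ U hU) [a _ h]; exists a.
- move=> x y e; apply: funext => i; apply: contrapT => nxy.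
  have [A [oA xA yA]] := T1 (x i) (y i) (introN eqP nxy).
  have [a [W [BaW Wx WA]]] := bget (x i) A (open_nbhs_nbhs (conj oA (set_mem xA))).
  have e2 : c a y = c a x by have := congr1 (fun f => (f a).1) e.
  have Wy := cE2 a x y W i e2 BaW Wx.
  by move: yA; rewrite inE => /(_ (WA _ Wy)).
Qed.
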